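(* Let $n\geq 0$ and $r\geq 0$ be integers and let $k\in\mathbf{Z}$. Then \begin{align*} \tilde{A}_{n}^{(r,k)}(x)=\sum_{j=0}^{n}\Bigg\{\sum_{l=0}^{n-j}\sum_{a=0}^{n-j-l}\binom{n}{l+j}\binom{n-j-l}{a}S_{1}(l+j,j)\,B_{a}^{(a-r+1)}(1-r)\,\tilde{C}_{n-j-l-a}^{(k)}\Bigg\}x^{j}. \end{align*}
   Context: For $k\in\mathbf{Z}$, $Lif_{k}(x)=\sum_{m=0}^{\infty}\frac{x^{m}}{m!(m+1)^{k}}$. For integers $r\geq 0$, $k\in\mathbf{Z}$, the polynomials $\tilde{A}_{n}^{(r,k)}(x)$ are defined by \[\left(\frac{t}{(1+t)\log(1+t)}\right)^{r}Lif_{k}\left(-\log(1+t)\right)(1+t)^{x}=\sum_{n=0}^{\infty}\tilde{A}_{n}^{(r,k)}(x)\frac{t^{n}}{n!}.\] The poly-Cauchy numbers of the second kind $\tilde{C}_{n}^{(k)}$ are defined by $Lif_{k}\left(-\log(1+t)\right)=\sum_{n=0}^{\infty}\tilde{C}_{n}^{(k)}\frac{t^{n}}{n!}$. For an integer $\alpha$ (possibly negative), the Bernoulli polynomials of order $\alpha$ are defined by $\left(\frac{t}{e^{t}-1}\right)^{\alpha}e^{xt}=\sum_{n=0}^{\infty}B_{n}^{(\alpha)}(x)\frac{t^{n}}{n!}$. $S_{1}(n,m)$ denotes the signed Stirling numbers of the first kind, defined by $x(x-1)\cdots(x-n+1)=\sum_{m=0}^{n}S_{1}(n,m)x^{m}$.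 *)

(* Defs.v *)
(* Generating functions are treated as formal power series,
   represented by their coefficient sequences nat -> R. *)
From HB Require Import structures.
From mathcomp Require Import all_boot all_order all_algebra.
Set Implicit Arguments. Unset Strict Implicit. Unset Printing Implicit Defensive.
Import Order.TTheory GRing.Theory Num.Theory.
Local Open Scope ring_scope.

Definition fps (R : Type) := nat -> R.

Section Fps.
Variable R : pzRingType.
Definition fps_one : fps R := fun n => (n == 0%N)%:R.
Definition fps_mul (f g : fps R) : fps R :=
  fun n => \sum_(i < n.+1) f i * g (n - i)%N.
Definition fps_pow (f : fps R) (m : nat) : fps R := iter m (fps_mul f) fps_one.
(* composition f(g(t)), meaningful when g has zero constant term *)
Definition fps_comp (f g : fps R) : fps R :=
  fun n => \sum_(m < n.+1) f m * fps_pow g m n.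
(* multiplicative inverse of a series with constant term 1:
   1/(1+u) = sum_m (-1)^m u^m, where u = f - 1 *)
Definition fps_inv1 (f : fps R) : fps R :=
  fps_comp (fun m => (-1) ^+ m) (fun n => if n == 0%N then 0 else f n).
End Fps.

Definition log1p : fps rat :=
  fun n => if n == 0%N then 0 else (-1) ^+ n.+1 / n%:R.

Definition lif (k : int) : fps rat :=
  fun m => (m`!%:R * (m.+1%:R : rat) ^ k)^-1.

Definition cauchy2_gf (k : int) : fps rat :=
  fps_comp (lif k) (fun n => - log1p n).

Definition C2 (k : int) (n : nat) : rat := n`!%:R * cauchy2_gf k n.

Definition expm1_div_t : fps rat := fun n => (n.+1`!%:R)^-1.

(* (t/(e^t-1))^alpha e^{x t}, alpha an integer *)
Definition bern_gf (alpha : int) (x : rat) : fps rat :=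
  fps_mul (match alpha with
           | Posz m => fps_pow (fps_inv1 expm1_div_t) m
           | Negz m => fps_pow expm1_div_t m.+1
           end)
          (fun n => x ^+ n / n`!%:R).

Definition bernoulliB (n : nat) (alpha : int) (x : rat) : rat :=
  n`!%:R * bern_gf alpha x n.

Definition S1 (n m : nat) : rat :=
  (\prod_(i < n) ('X - (i%:R)%:P) : {poly rat})`_m.

(* t / ((1+t) log(1+t)) = 1 / ((1+t) * (log(1+t)/t)) *)
Definition tdiv_log_gf : fps rat :=
  fps_inv1 (fps_mul (fun n => (n <= 1)%N%:R) (fun n => (-1) ^+ n / n.+1%:R)).

(* (1+t)^x = exp(x log(1+t)), with coefficients polynomials in x *)
Definition onept_pow_x : fps {poly rat} :=
  fps_comp (fun n => ((n`!%:R : rat)^-1)%:P) (fun n => 'X * (log1p n)%:P).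

Definition Atilde_gf (r : nat) (k : int) : fps {poly rat} :=
  fps_mul (fun n => (fps_mul (fps_pow tdiv_log_gf r) (cauchy2_gf k) n)%:P)
          onept_pow_x.

Definition Atilde (n r : nat) (k : int) : {poly rat} :=
  n`!%:R *: Atilde_gf r k n.

(* Main.v *)
Require Import Defs.
From HB Require Import structures.
From mathcomp Require Import all_boot all_order all_algebra.
From mathcomp Require Import ring zify.
Unset Printing Implicit Defensive.
Import Order.TTheory GRing.Theory Num.Theory.
Local Open Scope ring_scope.

Lemma sum_trunc (R : nmodType) (G : nat -> R) i N : (i < N)%N ->
  (forall m, (i < m)%N -> G m = 0) -> \sum_(m < N) G m = \sum_(m < i.+1) G m.
Proof.
move=> hi hG; rewrite (big_ord_widen N G hi) [RHS]big_mkcond /=; apply: eq_bigr => m _.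
by case: ifP => // /negbT; rewrite -leqNgt => h; rewrite hG.
Qed.

Section Trunc.
Variable R : comNzRingType.
Implicit Types p q : {poly R}.

Definition eqm (N : nat) p q := forall i, (i < N)%N -> p`_i = q`_i.

Lemma eqm_refl N p : eqm N p p. Proof. by []. Qed.
Lemma eqm_sym N p q : eqm N p q -> eqm N q p.
Proof. by move=> h i hi; rewrite h. Qed.
Lemma eqm_trans N p q s : eqm N p q -> eqm N q s -> eqm N p s.
Proof. by move=> h1 h2 i hi; rewrite h1 // h2. Qed.
Lemma eqm_le M N p q : (M <= N)%N -> eqm N p q -> eqm M p q.
Proof. by move=> hMN h i hi; apply: h; apply: leq_trans hMN. Qed.
Lemma eqm_add N p p' q q' : eqm N p p' -> eqm N q q' -> eqm N (p + q) (p' + q').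
Proof. by move=> h1 h2 i hi; rewrite !coefD h1 // h2. Qed.
Lemma eqm_opp N p p' : eqm N p p' -> eqm N (- p) (- p').
Proof. by move=> h i hi; rewrite !coefN h. Qed.
Lemma eqm_mul N p p' q q' : eqm N p p' -> eqm N q q' -> eqm N (p * q) (p' * q').
Proof.
move=> h1 h2 i hi; rewrite !coefM; apply: eq_bigr => j _.
rewrite h1 ?h2 //; first exact: leq_ltn_trans (leq_subr _ _) hi.
exact: leq_ltn_trans (ltnSE (ltn_ord j)) hi.
Qed.
Lemma eqm_exp N p p' m : eqm N p p' -> eqm N (p ^+ m) (p' ^+ m).
Proof.
move=> h; elim: m => [|m IH]; first by rewrite !expr0.
by rewrite !exprS; apply: eqm_mul.
Qed.
Lemma eqm_scale N c p p' : eqm N p p' -> eqm N (c *: p) (c *: p').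
Proof. by move=> h i hi; rewrite !coefZ h. Qed.
Lemma eqm_sum N I (r : seq I) (P : pred I) (F G : I -> {poly R}) :
  (forall i, P i -> eqm N (F i) (G i)) ->
  eqm N (\sum_(i <- r | P i) F i) (\sum_(i <- r | P i) G i).
Proof.
move=> h j hj; rewrite !coef_sum; apply: eq_bigr => i Pi; exact: h.
Qed.

End Trunc.
Arguments eqm {R}.
Arguments eqm_refl {R N p}.
Arguments eqm_sym {R N p q}.
Arguments eqm_trans {R N p q s}.
Arguments eqm_le {R M N p q}.
Arguments eqm_add {R N p p' q q'}.
Arguments eqm_opp {R N p p'}.
Arguments eqm_mul {R N p p' q q'}.
Arguments eqm_exp {R N p p'} m.
Arguments eqm_scale {R N} c {p p'}.
Arguments eqm_sum {R N I r P F G}.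
Section Trunc2.
Variable R : comNzRingType.
Implicit Types p q : {poly R}.
Lemma eqm_compr N p q q' : eqm N q q' -> eqm N (p \Po q) (p \Po q').
Proof.
move=> h; rewrite !comp_polyE; apply: eqm_sum => i _.
by apply: eqm_scale; apply: eqm_exp.
Qed.

Lemma eqm_XnM N n p : (N <= n)%N -> eqm N ('X^n * p) 0.
Proof.
move=> hn i hi; rewrite coefXnM coef0 ifT //; exact: leq_trans hi hn.
Qed.

Lemma const0_X q : q`_0 = 0 -> q = 'X * drop_poly 1 q.
Proof.
move=> h; rewrite -{1}(poly_take_drop 1 q) mulrC.
suff -> : take_poly 1 q = 0 by rewrite add0r.
apply/polyP => i; rewrite coef_poly coef0; case: i => //.
Qed.

Lemma const0_exp q m : q`_0 = 0 -> exists s, q ^+ m = 'X^m * s.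
Proof.
move=> h; exists (drop_poly 1 q ^+ m).
by rewrite {1}(const0_X q h) exprMn.
Qed.

Lemma eqm_compl N p p' q : q`_0 = 0 -> eqm N p p' -> eqm N (p \Po q) (p' \Po q).
Proof.
move=> hq h.
have key : forall s, eqm N s 0 -> eqm N (s \Po q) 0.
  move=> s hs; rewrite -(poly_take_drop N s).
  have -> : take_poly N s = 0.
    apply/polyP => i; rewrite coef_poly coef0; case: ifP => // hi; rewrite hs ?coef0 //.
  rewrite add0r comp_polyM rmorphXn /= comp_polyX.
  have [t ->] := const0_exp q N hq.
  by rewrite mulrC -mulrA; apply: eqm_XnM.
have := key (p - p'); rewrite comp_polyB => H.
move=> i hi; apply/eqP; rewrite -subr_eq0 -coefB; apply/eqP; rewrite H ?coef0 //.
by move=> j hj; rewrite coefB h // subrr coef0.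
Qed.

Implicit Types f g : fps R.

Definition tp N (f : fps R) : {poly R} := \poly_(i < N) f i.

Lemma coef_tp N f i : (tp N f)`_i = if (i < N)%N then f i else 0.
Proof. by rewrite coef_poly. Qed.

Lemma eqm_tp N f g : (forall i, (i < N)%N -> f i = g i) -> eqm N (tp N f) (tp N g).
Proof. by move=> h i hi; rewrite !coef_tp hi h. Qed.

Lemma eqm_tpE N f (p : {poly R}) : (forall i, (i < N)%N -> f i = p`_i) -> eqm N (tp N f) p.
Proof. by move=> h i hi; rewrite coef_tp hi h. Qed.

Lemma tp_le M N f : (M <= N)%N -> eqm M (tp N f) (tp M f).
Proof. move=> h i hi; rewrite !coef_tp hi (leq_trans hi h) //. Qed.

Lemma tp_one N : eqm N (tp N (fps_one R)) 1.
Proof. by move=> i hi; rewrite coef_tp hi coefC /fps_one; case: i {hi}. Qed.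

Lemma tp_mul N f g : eqm N (tp N (fps_mul f g)) (tp N f * tp N g).
Proof.
move=> i hi; rewrite coef_tp hi coefM /fps_mul; apply: eq_bigr => j _.
rewrite !coef_tp (leq_ltn_trans (leq_subr _ _) hi).
by rewrite (leq_ltn_trans (ltnSE (ltn_ord j)) hi).
Qed.

Lemma tp_pow N f m : eqm N (tp N (fps_pow f m)) (tp N f ^+ m).
Proof.
elim: m => [|m IH]; first by rewrite expr0; apply: tp_one.
have -> : fps_pow f m.+1 = fps_mul f (fps_pow f m) by [].
rewrite exprS; apply: (eqm_trans (tp_mul N f (fps_pow f m))); exact: eqm_mul.
Qed.

Lemma tp0 N f : f 0%N = 0 -> (tp N f)`_0 = 0.
Proof. by rewrite coef_tp; case: N. Qed.

Lemma pow_low (q : {poly R}) m i : q`_0 = 0 -> (i < m)%N -> (q ^+ m)`_i = 0.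
Proof. by move=> h hi; have [s ->] := const0_exp q m h; rewrite coefXnM hi. Qed.

Lemma fps_pow_low f m i : f 0%N = 0 -> (i < m)%N -> fps_pow f m i = 0.
Proof.
move=> h hi; have := tp_pow i.+1 f m i (ltnSn i).
by rewrite coef_tp ltnSn => ->; apply: pow_low => //; apply: tp0.
Qed.

Lemma comp_tp N f (q : {poly R}) : tp N f \Po q = \sum_(m < N) f m *: q ^+ m.
Proof.
rewrite /tp poly_def rmorph_sum /=; apply: eq_bigr => m _.
by rewrite comp_polyZ rmorphXn /= comp_polyX.
Qed.

Lemma tp_comp N f g : g 0%N = 0 -> eqm N (tp N (fps_comp f g)) (tp N f \Po tp N g).
Proof.
move=> hg i hi; rewrite coef_tp hi comp_tp coef_sum /fps_comp.
rewrite (sum_trunc _ (fun m => (f m *: tp N g ^+ m)`_i) i N hi); last first.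
  by move=> m hm; rewrite coefZ pow_low ?mulr0 // tp0.
apply: eq_bigr => m _; rewrite coefZ -tp_pow // coef_tp hi //.
Qed.


Lemma eqm0 p q : eqm 0 p q. Proof. by []. Qed.

Lemma inv_unique N (A B M : {poly R}) : eqm N (A * M) 1 -> eqm N (B * M) 1 -> eqm N A B.
Proof.
move=> hA hB.
have e1 : eqm N (A * 1) (A * (B * M)) by apply: eqm_mul; [|apply: eqm_sym].
have e2 : eqm N (B * 1) (B * (A * M)) by apply: eqm_mul; [|apply: eqm_sym].
rewrite mulr1 in e1; rewrite mulr1 in e2.
apply: (eqm_trans e1); apply: eqm_sym; apply: (eqm_trans e2).
by rewrite mulrA [B * A]mulrC -mulrA.
Qed.

Lemma tp_inv1 N f : f 0%N = 1 -> eqm N (tp N (fps_inv1 f) * tp N f) 1.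
Proof.
move=> h0; case: N => [|N]; first exact: eqm0.
set g := (fun n => if n == 0%N then 0 else f n).
set u := tp N.+1 g.
have hu : u`_0 = 0 by rewrite coef_tp.
have -> : tp N.+1 f = 1 + u.
  apply/polyP => i; rewrite coefD !coef_tp coefC /g; case: i => [|i] //=.
  by rewrite h0 addr0.
  by rewrite add0r.
set A := tp N.+1 (fun m => (-1) ^+ m : R).
have e1 : eqm N.+1 (tp N.+1 (fps_inv1 f)) (A \Po u) by apply: tp_comp.
apply: (eqm_trans (eqm_mul e1 (eqm_refl))).
have -> : (A \Po u) * (1 + u) = (A * (1 + 'X)) \Po u.
  by rewrite comp_polyM comp_polyD comp_polyX rmorph1.
have h2 : eqm N.+1 (A * (1 + 'X)) 1.
  move=> i hi; rewrite mulrDr mulr1 coefD coefMX /A !coef_tp hi coefC.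
  case: i hi => [|i] hi //=; first by rewrite addr0.
  by rewrite (ltnW hi) exprS mulN1r addNr.
have := eqm_compl N.+1 _ _ u hu h2; by rewrite rmorph1.
Qed.


End Trunc2.

Section Trunc3.
Variable R : comNzRingType.
Implicit Types p q : {poly R}.
Lemma eqm_deriv N p q : eqm N.+1 p q -> eqm N p^`() q^`().
Proof. by move=> h i hi; rewrite !coef_deriv h. Qed.
Lemma eqm_Xcancel N p q : eqm N.+1 ('X * p) ('X * q) -> eqm N p q.
Proof. by move=> h i hi; have := h i.+1 hi; rewrite !coefXM. Qed.
Lemma comp_const0 p q : q`_0 = 0 -> (p \Po q)`_0 = p`_0.
Proof.
move=> hq; have h : eqm 1 q 0 by case=> // _; rewrite coef0.
by rewrite (eqm_compr R 1 p q 0 h 0%N) // comp_poly0r coefC.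
Qed.
Lemma comp_exp p q m : (p ^+ m) \Po q = (p \Po q) ^+ m.
Proof. by rewrite rmorphXn. Qed.
End Trunc3.

Lemma deriv_inj (F : numFieldType) N (p q : {poly F}) :
  eqm N p^`() q^`() -> p`_0 = q`_0 -> eqm N.+1 p q.
Proof.
move=> h h0 i. case: i => [|i] hi. exact: h0.
have := h i hi; rewrite !coef_deriv => /eqP; rewrite -subr_eq0 -mulrnBl mulrn_eq0 /= subr_eq0 => /eqP. done.
Qed.


Definition expc (c : rat) : fps rat := fun n => c ^+ n / n`!%:R.

Lemma fact_neq0 n : (n`!%:R : rat) != 0.
Proof. by rewrite pnatr_eq0 -lt0n fact_gt0. Qed.

Lemma expc_mul c d n : fps_mul (expc c) (expc d) n = expc (c + d) n.
Proof.
rewrite /fps_mul /expc addrC exprDn mulr_suml; apply: eq_bigr => -[i hi] _ /=.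
have hf : (n`!%:R : rat) = 'C(n,i)%:R * (i`!%:R * (n-i)`!%:R).
  by rewrite -!natrM bin_fact.
have h1 := fact_neq0 i; have h2 := fact_neq0 (n - i).
have h3 : ('C(n,i)%:R : rat) != 0 by rewrite pnatr_eq0 -lt0n bin_gt0.
rewrite hf -mulr_natr; field.
by rewrite h1 h2 h3.
Qed.

Lemma expc0 n : expc 0 n = (n == 0%N)%:R.
Proof. by rewrite /expc; case: n => [|n]; rewrite ?expr0 ?divr1 // expr0n mul0r. Qed.

Definition l1ser : fps rat := fun n => (-1) ^+ n / n.+1%:R.
Definition onept : fps rat := fun n => (n <= 1)%N%:R.
Definition Mser : fps rat := fps_mul onept l1ser.

Section Key.
Variable N : nat.
Notation K := N.+1.
Definition ex c := tp rat K (expc c).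
Definition E1 := tp rat K expm1_div_t.
Definition psi : {poly rat} := 'X * E1.
Definition Phi := tp rat K (fps_inv1 expm1_div_t).
Definition L1 := tp rat K l1ser.
Definition T := tp rat K tdiv_log_gf.

Lemma ex_mul c d : eqm K (ex c * ex d) (ex (c + d)).
Proof.
rewrite /ex; apply: (eqm_trans (eqm_sym (tp_mul rat K (expc c) (expc d)))); apply: eqm_tp => i _; exact: expc_mul.
Qed.

Lemma ex0 : eqm K (ex 0) 1.
Proof. by move=> i hi; rewrite coef_tp hi expc0 coefC; case: i {hi}. Qed.

Lemma ex_pow c m : eqm K (ex c ^+ m) (ex (c *+ m)).
Proof.
elim: m => [|m IH]; first by rewrite expr0 mulr0n; apply: eqm_sym; apply: ex0.
rewrite exprS mulrS; apply: eqm_trans (eqm_mul (@eqm_refl _ _ (ex c)) IH) _.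
exact: ex_mul.
Qed.

Lemma psi0 : psi`_0 = 0.
Proof. by rewrite coefXM. Qed.

Lemma ex1psi : eqm K (1 + psi) (ex 1).
Proof.
move=> i hi; rewrite coefD coefC coefXM /ex !coef_tp hi /expc expr1n.
case: i hi => [|i] hi /=; first by rewrite addr0 fact0 divr1.
by rewrite (ltnW hi) add0r /expm1_div_t div1r.
Qed.

Lemma dpsi : eqm K psi^`() (ex 1).
Proof.
move=> i hi; rewrite coef_deriv coefXM /= /ex !coef_tp hi /expc expr1n /expm1_div_t.
have h1 := fact_neq0 i.
have h2 : (1 + i%:R : rat) != 0 by rewrite addrC natr1 pnatr_eq0.
rewrite -mulr_natr factS natrM; field.
by rewrite h1 h2.
Qed.

Lemma hPhi : eqm K (Phi * E1) 1.
Proof. apply: tp_inv1; by rewrite /expm1_div_t invr1. Qed.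

Lemma dL : eqm K (('X * L1)^`() * (1 + 'X)) 1.
Proof.
have hd : forall i, (i < K)%N -> ('X * L1)^`()`_i = (-1) ^+ i.
  move=> i hi; rewrite coef_deriv coefXM /= /L1 coef_tp hi /l1ser.
  have h : (i.+1%:R : rat) != 0 by rewrite pnatr_eq0.
  by rewrite -mulrnAr -[_ *+ i.+1]mulr_natl mulfV // mulr1.
move=> i hi; rewrite mulrDr mulr1 coefD coefMX coefC hd //.
case: i hi => [|i] hi /=; first by rewrite addr0.
by rewrite hd ?(ltnW hi) // exprS mulN1r addNr.
Qed.


Lemma logpsi : eqm K (('X * L1) \Po psi) 'X.
Proof.
have hd : eqm K (('X * L1) \Po psi)^`() ('X)^`().
  rewrite deriv_comp derivX.
  apply: eqm_trans (eqm_mul (@eqm_refl _ _ (('X * L1)^`() \Po psi)) (eqm_trans (dpsi) (eqm_sym (ex1psi)))) _.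
  have -> : (('X * L1)^`() \Po psi) * (1 + psi) = ((('X * L1)^`() * (1 + 'X)) \Po psi).
    by rewrite comp_polyM comp_polyD comp_polyX rmorph1.
  by have := eqm_compl _ _ _ _ psi psi0 (dL); rewrite rmorph1.
apply: (eqm_le _ (deriv_inj _ _ _ _ hd _)) => //.
by rewrite comp_const0 ?psi0 // coefXM coefX.
Qed.

Lemma E1L1 : eqm N (E1 * (L1 \Po psi)) 1.
Proof.
apply: eqm_Xcancel; rewrite mulr1.
have -> : 'X * (E1 * (L1 \Po psi)) = ('X * L1) \Po psi by rewrite comp_polyM comp_polyX mulrA.
exact: logpsi.
Qed.

Lemma Mser0 : Mser 0%N = 1.
Proof. rewrite /Mser /fps_mul big_ord1 /onept /l1ser /= subnn expr0 mulr1n ?invr1 ?divr1 ?mul1r ?mulr1. by []. Qed.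

Lemma hT : eqm K (T * ((1 + 'X) * L1)) 1.
Proof.
have h1 : eqm K (T * tp rat K Mser) 1 by apply: (tp_inv1 rat K Mser); exact: Mser0.
have h2 : eqm K (tp rat K Mser) ((1 + 'X) * L1).
  apply: eqm_trans (tp_mul _ _ _ _) _; apply: eqm_mul => // i hi.
  rewrite coef_tp hi coefD coefC coefX /onept.
  by case: i {hi} => [|[|i]] //=; rewrite ?addr0 ?add0r.
exact: eqm_trans (eqm_mul (@eqm_refl _ _ T) (eqm_sym h2)) h1.
Qed.

Lemma hTpsi : eqm K ((T \Po psi) * ((1 + psi) * (L1 \Po psi))) 1.
Proof.
have := eqm_compl _ _ _ _ psi psi0 hT.
by rewrite rmorph1 !comp_polyM comp_polyD comp_polyX rmorph1.
Qed.

Lemma Tpsi : eqm N (T \Po psi) (E1 * ex (-1)).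
Proof.
apply: (inv_unique _ _ _ _ ((1 + psi) * (L1 \Po psi))).
  exact: eqm_le _ hTpsi.
have -> : E1 * ex (-1) * ((1 + psi) * (L1 \Po psi)) =
  (E1 * (L1 \Po psi)) * (ex (-1) * (1 + psi)) by ring.
rewrite -[X in eqm _ _ X]mulr1; apply: eqm_mul; first exact: E1L1.
apply: (eqm_le (leqnSn N)).
apply: eqm_trans (eqm_mul (@eqm_refl _ _ (ex (-1))) ex1psi) _.
apply: eqm_trans (ex_mul _ _) _; rewrite addNr; exact: ex0.
Qed.

Lemma Hpsi r : eqm N ((T ^+ r) \Po psi) (E1 ^+ r * ex (- r%:R)).
Proof.
rewrite comp_exp; apply: eqm_trans (eqm_exp r Tpsi) _; rewrite exprMn.
apply: eqm_mul => //; apply: (eqm_le (leqnSn N)).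
by rewrite -mulNrn; apply: ex_pow.
Qed.
End Key.

Lemma mulrnSI (x y : rat) n : x *+ n.+1 = y *+ n.+1 -> x = y.
Proof.
move=> /eqP; rewrite -subr_eq0 -mulrnBl mulrn_eq0 /= subr_eq0 => /eqP; done.
Qed.

Lemma sum_pick (G : nat -> rat) M a :
  \sum_(b < M) G b * ((b : nat) == a)%:R = if (a < M)%N then G a else 0.
Proof.
elim: M => [|M IH]; first by rewrite big_ord0.
rewrite big_ord_recr /= IH.
case: (ltngtP a M) => h.
- by rewrite mulr0 addr0 ltnS ltnW.
- by rewrite mulr0 addr0 ltnS leqNgt h.
- by rewrite mulr1 add0r h ltnSn.
Qed.

Section Key2.
Variable N : nat.
Notation K := N.+1.

Lemma Wlem c : (c < N)%N -> (Phi N ^+ c.+1 * (psi N)^`())`_c = (c == 0%N)%:R.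
Proof.
move=> hc.
set P := Phi N; set E := E1 N.
have hP : eqm K (P * E) 1 by apply: hPhi.
have hd : eqm N (P^`() * E + P * E^`()) 0.
  by have := eqm_deriv _ _ _ _ hP; rewrite derivM derivC.
have -> : P ^+ c.+1 * (psi N)^`() = P ^+ c * (P * E) + 'X * (P ^+ c.+1 * E^`()).
  rewrite /psi derivM derivX mul1r -/E exprS; ring.
rewrite coefD coefXM (eqm_mul (@eqm_refl _ _ (P ^+ c)) hP c (leqW hc)) mulr1.
case: c hc => [|d] hc /=; first by rewrite expr0 coefC addr0.
have e1 : eqm N (P ^+ d.+2 * E^`()) (- (P ^+ d * P^`())).
  have -> : P ^+ d.+2 * E^`() = P ^+ d * P * (P * E^`()) by rewrite !exprS; ring.
  have h2 : eqm N (P * E^`()) (- (P^`() * E)).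
    move=> i hi; have := hd i hi; rewrite coefD coef0 coefN => /eqP.
    by rewrite addrC addr_eq0 => /eqP.
  apply: eqm_trans (eqm_mul (@eqm_refl _ _ (P ^+ d * P)) h2) _.
  have -> : P ^+ d * P * - (P^`() * E) = - (P ^+ d * P^`() * (P * E)) by ring.
  apply: eqm_opp; rewrite -[X in eqm _ _ X]mulr1; apply: eqm_mul => //.
  exact: eqm_le _ hP.
rewrite (e1 d (ltnW hc)) coefN.
have e2 : (P ^+ d * P^`())`_d = (P ^+ d.+1)`_d.+1.
  apply: (mulrnSI _ _ d); rewrite -coef_deriv deriv_exp /= -coefMn; congr (_`_d).
  by rewrite mulrC.
by rewrite e2 subrr.
Qed.


Lemma Zlem a b : (a.+1 < N)%N ->
  ((psi N) ^+ b * (psi N)^`() * Phi N ^+ a.+1)`_a = (b == a)%:R.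
Proof.
move=> ha.
set P := Phi N; set E := E1 N.
case: (ltnP a b) => hab.
  rewrite /psi exprMn -!mulrA coefXnM hab.
  by rewrite (gtn_eqF hab).
have [c hc] : exists c, a = (c + b)%N by exists (a - b)%N; rewrite subnK.
have e1 : eqm K ((psi N) ^+ b * P ^+ a.+1) ('X^b * P ^+ c.+1).
  have -> : (psi N) ^+ b * P ^+ a.+1 = 'X^b * ((P * E) ^+ b * P ^+ c.+1).
    by rewrite /psi hc -addSn exprD !exprMn; ring.
  rewrite -[X in eqm _ _ ('X^b * X)]mul1r; apply: eqm_mul => //; apply: eqm_mul => //.
  by rewrite -(expr1n _ b); apply: eqm_exp; apply: hPhi.
have e2 := eqm_mul e1 (@eqm_refl _ _ (psi N)^`()).
rewrite mulrAC (e2 a (leqW (ltnW ha))) -mulrA coefXnM ltnNge hab /=.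
have -> : (a - b = c)%N by rewrite hc addnK.
rewrite Wlem; last by lia.
have -> : (b == a) = (c == 0%N) by rewrite hc; apply/eqP/eqP; lia.
done.
Qed.

Lemma keyH r a : (a.+1 < N)%N ->
  (T N ^+ r)`_a = (ex N (1 - r%:R) * E1 N ^+ r * Phi N ^+ a.+1)`_a.
Proof.
move=> ha.
set H := T N ^+ r.
have G1 : ((H \Po psi N) * (psi N)^`() * Phi N ^+ a.+1)`_a = H`_a.
  rewrite comp_polyE !mulr_suml coef_sum.
  under eq_bigr => b _ do rewrite -!scalerAl coefZ Zlem //.
  rewrite sum_pick; case: ifP => // /negbT; rewrite -leqNgt => h.
  by rewrite nth_default.
rewrite -G1.
have e : eqm N ((H \Po psi N) * (psi N)^`() * Phi N ^+ a.+1)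
               (ex N (1 - r%:R) * E1 N ^+ r * Phi N ^+ a.+1).
  apply: eqm_mul => //.
  apply: eqm_trans (eqm_mul (Hpsi N r) (eqm_le (leqnSn N) (dpsi N))) _.
  rewrite -mulrA mulrC; apply: eqm_mul => //.
  apply: eqm_trans (eqm_le (leqnSn N) (ex_mul N _ _)) _.
  by rewrite addrC.
by apply: e; apply: ltnW.
Qed.
End Key2.

Lemma key r a :
  fps_pow tdiv_log_gf r a * a`!%:R = bernoulliB a (a%:Z - r%:Z + 1) (1 - r%:R).
Proof.
pose N := a.+2.
have ha : (a.+1 < N)%N by [].
have haK : (a < N.+1)%N by rewrite ltnS ltnW.
have e1 : fps_pow tdiv_log_gf r a = (T N ^+ r)`_a.
  by rewrite -(tp_pow _ _ _ _ a haK) coef_tp haK.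
rewrite e1 keyH // /bernoulliB mulrC; congr (_ * _).
have pw : forall (alpha : int) (pp : fps rat),
  eqm N.+1 (E1 N ^+ r * Phi N ^+ a.+1) (tp rat N.+1 pp) ->
  (match alpha with
           | Posz m => fps_pow (fps_inv1 expm1_div_t) m
           | Negz m => fps_pow expm1_div_t m.+1
           end) = pp ->
  (ex N (1 - r%:R) * E1 N ^+ r * Phi N ^+ a.+1)`_a = bern_gf alpha (1 - r%:R) a.
  move=> alpha pp hpp hal.
  rewrite /bern_gf hal.
  transitivity ((tp rat N.+1 (fps_mul pp (expc (1 - r%:R))))`_a); last by rewrite coef_tp haK.
  rewrite -mulrA mulrC.
  have E : eqm N.+1 (tp rat N.+1 (fps_mul pp (expc (1 - r%:R))))
              (E1 N ^+ r * Phi N ^+ a.+1 * ex N (1 - r%:R)).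
    apply: (eqm_trans (tp_mul _ _ _ _)); apply: eqm_mul => //; exact: eqm_sym.
  by rewrite (E a haK).
case: (leqP r a.+1) => hr.
  have -> : (a%:Z - r%:Z + 1 = Posz (a.+1 - r))%R by lia.
  apply: (pw _ (fps_pow (fps_inv1 expm1_div_t) (a.+1 - r))) => //.
  apply: eqm_sym; apply: (eqm_trans (tp_pow _ _ _ _)).
  have -> : Phi N ^+ a.+1 = Phi N ^+ r * Phi N ^+ (a.+1 - r) by rewrite -exprD subnKC.
  rewrite mulrA -exprMn mulrC -[X in eqm _ X _]mulr1.
  apply: eqm_mul => //; apply: eqm_sym; rewrite -(expr1n _ r); apply: eqm_exp.
  by rewrite mulrC; apply: hPhi.
have -> : (a%:Z - r%:Z + 1 = Negz (r - a.+2))%R by rewrite NegzE; lia.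
apply: (pw _ (fps_pow expm1_div_t (r - a.+2).+1)) => //.
apply: eqm_sym; apply: (eqm_trans (tp_pow _ _ _ _)).
have -> : (r - a.+2).+1 = (r - a.+1)%N by lia.
have -> : E1 N ^+ r = E1 N ^+ (r - a.+1) * E1 N ^+ a.+1 by rewrite -exprD subnK // ltnW.
rewrite -mulrA -exprMn -[X in eqm _ X _]mulr1.
apply: eqm_mul => //; apply: eqm_sym; rewrite -(expr1n _ a.+1); apply: eqm_exp.
by rewrite mulrC; apply: hPhi.
Qed.


Notation PR := {poly rat}.

Section Pow.
Variable N : nat.
Notation K := N.+1.
Definition Ex : {poly PR} := tp PR K (fun n => ((n`!%:R : rat)^-1)%:P).
Definition Qs : fps PR := fun n => 'X * (log1p n)%:P.
Definition Q : {poly PR} := tp PR K Qs.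
Definition F : {poly PR} := Ex \Po Q.

Lemma Q0 : Q`_0 = 0.
Proof. by rewrite coef_tp /Qs /log1p /= mulr0. Qed.

Lemma dEx : eqm N Ex^`() Ex.
Proof.
move=> i hi; rewrite coef_deriv /Ex !coef_tp !ltnS hi (ltnW hi) -polyCMn; congr (_%:P).
have h1 : (i`!%:R : rat) != 0 by rewrite pnatr_eq0 -lt0n fact_gt0.
have h2 : (1 + i%:R : rat) != 0 by rewrite addrC natr1 pnatr_eq0.
rewrite -mulr_natr factS natrM; field.
by rewrite h1 h2.
Qed.

Lemma dQ : eqm N (Q^`() * (1 + 'X)) (('X : PR)%:P).
Proof.
have hd : forall i, (i < N)%N -> Q^`()`_i = 'X * ((-1) ^+ i)%:P.
  move=> i hi; rewrite coef_deriv /Q coef_tp ltnS hi /Qs /log1p /= -mulrnAr -polyCMn.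
  congr (_ * _%:P).
  have h : (i.+1%:R : rat) != 0 by rewrite pnatr_eq0.
  by rewrite -mulrnAr -[_ *+ i.+1]mulr_natl mulfV // mulr1 !exprS !mulN1r opprK.
move=> i hi; rewrite mulrDr mulr1 coefD coefMX coefC hd //.
case: i hi => [|i] hi /=; first by rewrite addr0 expr0 polyC1 mulr1.
by rewrite (hd i (ltnW hi)) exprS mulN1r polyCN mulrN addNr.
Qed.

Lemma ode : eqm N (F^`() * (1 + 'X)) (F * ('X : PR)%:P).
Proof.
rewrite /F deriv_comp -mulrA.
apply: eqm_mul; last exact: dQ.
by apply: eqm_compl; [exact: Q0 | exact: dEx].
Qed.

Lemma Fcoef i : (i < K)%N -> (i`!%:R : rat) *: F`_i = \prod_(j < i) ('X - (j%:R)%:P).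
Proof.
elim: i => [|i IH] hi.
  by rewrite big_ord0 /F comp_const0 ?Q0 // /Ex coef_tp /= invr1 scale1r.
have hiN : (i < N)%N by [].
have e := ode i hiN.
rewrite mulrDr mulr1 coefD coefMX coefMC coef_deriv in e.
have e2 : F`_i.+1 *+ i.+1 = F`_i * ('X - (i%:R)%:P).
  case: i {IH hi hiN} e => [|i] e /=.
    have -> : ('X - ((0%N)%:R)%:P : PR) = 'X by rewrite polyC0 subr0.
    by rewrite -e addr0.
  by rewrite mulrBr -e /= coef_deriv polyC_natr mulr_natr addrK.
rewrite big_ord_recr /= -IH ?(ltnW hi) // -scalerAl -e2 factS natrM.
rewrite (mulrC i.+1%:R). rewrite -scalerA; congr (_ *: _); exact: scaler_nat.
Qed.
End Pow.

Lemma onept_coef m : (m`!%:R : rat) *: onept_pow_x m = \prod_(j < m) ('X - (j%:R)%:P).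
Proof.
rewrite -(Fcoef m m) //.
have h := tp_comp PR m.+1 (fun n => ((n`!%:R : rat)^-1)%:P) (Qs) _ m (ltnSn m).
rewrite coef_tp ltnSn in h; rewrite /onept_pow_x h //.
by rewrite /Qs /log1p /= mulr0.
Qed.


Lemma S1_high m j : (m < j)%N -> S1 m j = 0.
Proof.
move=> h; rewrite /S1 nth_default // size_prod_XsubC.
have -> : size (index_enum 'I_m) = m by rewrite -[RHS](card_ord m) cardT enumT.
exact: h.
Qed.

Lemma onept_S1 m j : (onept_pow_x m)`_j = S1 m j / m`!%:R.
Proof.
have h := onept_coef m.
have hf := fact_neq0 m.
rewrite /S1 -h coefZ mulrC mulKf //.
Qed.

Lemma fps_pow_B r a :
  fps_pow tdiv_log_gf r a = bernoulliB a (a%:Z - r%:Z + 1) (1 - r%:R) / a`!%:R.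
Proof. apply: (mulIf (fact_neq0 a)); rewrite key divfK; [reflexivity|exact: fact_neq0]. Qed.

Lemma cauchy_C2 k b : cauchy2_gf k b = C2 k b / b`!%:R.
Proof. by rewrite /C2 [_ * cauchy2_gf _ _]mulrC mulfK // fact_neq0. Qed.

Lemma rev_sum (F : nat -> rat) n : \sum_(i < n.+1) F i = \sum_(m < n.+1) F (n - m)%N.
Proof.
rewrite -(big_mkord xpredT F) big_rev_mkord subn0; apply: eq_bigr => m _; by rewrite subSS.
Qed.

Lemma shift_sum (G : nat -> rat) n j : (j <= n)%N -> (forall m, (m < j)%N -> G m = 0) ->
  \sum_(m < n.+1) G m = \sum_(l < (n - j).+1) G (l + j)%N.
Proof.
move=> hj hG; rewrite -(big_mkord xpredT G) -(big_mkord xpredT (fun l => G (l + j)%N)) (big_cat_nat (leq0n j) (leqW hj)) /=.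
rewrite big_nat_cond big1 ?add0r; last by move=> m /andP [/andP [_ h] _]; apply: hG.
by rewrite -{1}(add0n j) big_addn subSn.
Qed.

Lemma binom_id n m a : (m <= n)%N -> (a <= n - m)%N ->
  n`!%:R / (a`!%:R * (n - m - a)`!%:R * m`!%:R) = ('C(n, m) * 'C(n - m, a))%:R :> rat.
Proof.
move=> hm ha.
have e : n`! = ('C(n, m) * 'C(n - m, a) * (a`! * (n - m - a)`! * m`!))%N.
  rewrite -(bin_fact hm) -(bin_fact ha); ring.
by rewrite e !natrM mulfK // !mulf_neq0 ?fact_neq0.
Qed.

Lemma main_sum n j (Bn Cn s : nat -> rat) : (j <= n)%N -> (forall m, (m < j)%N -> s m = 0) ->
 n`!%:R * \sum_(i < n.+1) ((\sum_(a < i.+1) Bn a / a`!%:R * (Cn (i - a)%N / (i - a)`!%:R))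
     * (s (n - i)%N / (n - i)`!%:R))
 = \sum_(l < (n - j).+1) \sum_(a < (n - j - l).+1)
     ('C(n, l + j) * 'C(n - j - l, a))%:R * s (l + j)%N * Bn a * Cn (n - j - l - a)%N.
Proof.
move=> hj hs.
rewrite mulr_sumr.
pose Fi (i : nat) := n`!%:R * ((\sum_(a < i.+1) Bn a / a`!%:R * (Cn (i - a)%N / (i - a)`!%:R))
     * (s (n - i)%N / (n - i)`!%:R)).
rewrite (rev_sum Fi n) /Fi.
pose G m := \sum_(a < (n - m).+1) ('C(n, m) * 'C(n - m, a))%:R * s m * Bn a * Cn (n - m - a)%N.
transitivity (\sum_(m < n.+1) G m).
  apply: eq_bigr => -[m hm] _ /=.
  have hmn : (m <= n)%N by [].
  rewrite subKn // mulr_suml mulr_sumr; apply: eq_bigr => -[a ha] _ /=.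
  have han : (a <= n - m)%N by [].
  rewrite -(binom_id n m a) //.
  have h1 := fact_neq0 a; have h2 := fact_neq0 (n - m - a); have h3 := fact_neq0 m.
  field; by rewrite h1 h2 h3.
rewrite (shift_sum G n j hj); last first.
  by move=> m hm; rewrite /G big1 // => a _; rewrite hs // mulr0 !mul0r.
apply: eq_bigr => l _; rewrite /G.
by rewrite (addnC l j) subnDA.
Qed.

Theorem theorem3 (n r : nat) (k : int) :
  Atilde n r k =
  \sum_(j < n.+1)
    (\sum_(l < (n - j).+1) \sum_(a < (n - j - l).+1)
        ('C(n, l + j) * 'C(n - j - l, a))%:R * S1 (l + j) j
        * bernoulliB a (a%:Z - r%:Z + 1) (1 - r%:R)
        * C2 k (n - j - l - a))%:P * 'X^j.
Proof.
apply/polyP => j.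
rewrite /Atilde coefZ /Atilde_gf /fps_mul !coef_sum /=.
under eq_bigr => i _ do rewrite coefCM onept_S1.
case: (leqP j n) => hjn.
  rewrite [RHS](bigD1 (Ordinal (hjn : (j < n.+1)%N))) //= [X in _ + X]big1 ?addr0; last first.
    move=> j' hj'; rewrite coefCM coefXn.
    have hne : (j != j')%N by apply: contra hj' => /eqP h; apply/eqP/val_inj.
    by rewrite (negbTE hne) mulr0.
  rewrite coefCM coefXn eqxx mulr1.
  under eq_bigr => i _ do under eq_bigr => a _ do rewrite fps_pow_B cauchy_C2.
  apply: (main_sum n j (fun a => bernoulliB a (a%:Z - r%:Z + 1) (1 - r%:R)) (fun b => C2 k b) (fun m => S1 m j)) => //.
  by move=> m hm; apply: S1_high.
rewrite big1 ?mulr0; last by move=> i _; rewrite S1_high ?mul0r ?mulr0 //; lia.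
rewrite big1 // => j' _; rewrite coefCM coefXn.
have hne : (j != j')%N by apply/eqP => h; move: (ltn_ord j'); rewrite -h; lia.
by rewrite (negbTE hne) mulr0.
Qed.
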